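(* Let $n\ge 1$, let $p\in[1,\infty]$, and let $0\le x_0\le x_1\le\dots\le x_{n-1}<1$ and $0\le y_0\le y_1\le\dots\le y_{n-1}<1$ be real numbers. Let $\tilde y_j = y_{j \bmod n} + \lfloor j/n\rfloor$ for all $j\in\mathbb Z$ (the periodic unrolling of $\vec y$ onto the real line). Then the optimal value of the circular problem $$\min_{c\in[0,1),\ s\in\{0,\dots,n-1\}} \Big\| \big( d^\circ((x_i+c)\bmod 1,\ y_{(i+s)\bmod n}) \big)_{i=0}^{n-1} \Big\|_p$$ equals the optimal value of the linear problem $$\inf_{c\in\mathbb R,\ s\in\mathbb Z} \Big\| \big( |x_i+c-\tilde y_{i+s}| \big)_{i=0}^{n-1} \Big\|_p .$$
   Context: For $a,b\in[0,1)$, the circular distance is $d^\circ(a,b)=\min\{|a-b|,\,1-|a-b|\}$. $\|\cdot\|_p$ denotes the $\ell_p$ norm of a vector in $\mathbb R^n$ (the maximum of absolute values when $p=\infty$). *)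

(* Defs.v *)
From Stdlib Require Import Reals Lra Lia ZArith Arith.
Open Scope R_scope.

(* floor via Stdlib's [up] (up x = least integer > x) *)
Definition floorZ (x : R) : Z := (up x - 1)%Z.
Definition mod1 (x : R) : R := x - IZR (floorZ x).

Definition circ_dist (a b : R) : R := Rmin (Rabs (a - b)) (1 - Rabs (a - b)).

Inductive expo : Type := Fin (p : R) | Inf.
Definition valid_expo (e : expo) : Prop :=
  match e with Fin p => 1 <= p | Inf => True end.

(* x^p for x >= 0, with 0^p = 0 *)
Definition rpow (x p : R) : R :=
  if Req_EM_T x 0 then 0 else Rpower x p.

Fixpoint fsum (n : nat) (f : nat -> R) : R :=
  match n with O => 0 | S m => fsum m f + f m end.
Fixpoint fmaxabs (n : nat) (f : nat -> R) : R :=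
  match n with O => 0 | S m => Rmax (fmaxabs m f) (Rabs (f m)) end.

Definition lp_norm (e : expo) (n : nat) (v : nat -> R) : R :=
  match e with
  | Fin p => rpow (fsum n (fun i => rpow (Rabs (v i)) p)) (1 / p)
  | Inf => fmaxabs n v
  end.

Definition unroll (n : nat) (y : nat -> R) (j : Z) : R :=
  y (Z.to_nat (j mod Z.of_nat n)) + IZR (j / Z.of_nat n).

Definition circ_obj (e : expo) (n : nat) (x y : nat -> R) (c : R) (s : nat) : R :=
  lp_norm e n (fun i => circ_dist (mod1 (x i + c)) (y ((i + s) mod n)%nat)).

Definition lin_obj (e : expo) (n : nat) (x y : nat -> R) (c : R) (s : Z) : R :=
  lp_norm e n (fun i => Rabs (x i + c - unroll n y (Z.of_nat i + s)%Z)).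

Definition is_inf (E : R -> Prop) (m : R) : Prop :=
  (forall z, E z -> m <= z) /\ (forall b, (forall z, E z -> b <= z) -> b <= m).

Definition sorted01 (n : nat) (x : nat -> R) : Prop :=
  (forall i, (i < n)%nat -> 0 <= x i < 1) /\
  (forall i j, (i <= j < n)%nat -> x i <= x j).

(* Main.v *)
Require Import Defs.
From Stdlib Require Import Reals Lra Lia ZArith Arith Classical.
From Coquelicot Require Import Coquelicot.
Open Scope R_scope.

Lemma exp_le_mono a b : a <= b -> exp a <= exp b.
Proof. intros [H|H]; [left; apply exp_increasing; auto | subst; lra]. Qed.

Lemma bern_exp (p w : R) : 1 <= p -> 1 + p * (exp w - 1) <= exp (p * w).
Proof.
  intros Hp.
  destruct (MVT_gen (fun t => exp (p * t) - p * exp t) 0 w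
    (fun t => p * exp (p * t) - p * exp t)) as [c [Hc Heq]].
  - intros t _. auto_derive; auto; ring.
  - intros t _. apply continuity_pt_filterlim.
    apply (ex_derive_continuous (fun t => exp (p * t) - p * exp t)).
    auto_derive; auto.
  - simpl in Heq. rewrite Rmult_0_r, exp_0 in Heq.
    assert (0 <= (p * exp (p * c) - p * exp c) * (w - 0)).
    { destruct (Rle_dec 0 w) as [Hw|Hw].
      - rewrite Rmin_left, Rmax_right in Hc by lra.
        apply Rmult_le_pos; [|lra].
        assert (exp c <= exp (p*c)) by (apply exp_le_mono; nra). nra.
      - rewrite Rmin_right, Rmax_left in Hc by lra.
        assert (exp (p*c) <= exp c) by (apply exp_le_mono; nra).
        assert (0 <= p * exp c - p * exp (p * c)) by nra. nra. }
    lra.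
Qed.

Lemma bern (p r : R) : 1 <= p -> 0 < r -> 1 + p * (r - 1) <= Rpower r p.
Proof.
  intros Hp Hr. unfold Rpower.
  pose proof (bern_exp p (ln r) Hp). rewrite exp_ln in H by auto. lra.
Qed.

Lemma rpow_0 p : rpow 0 p = 0.
Proof. unfold rpow. destruct (Req_EM_T 0 0); lra. Qed.

Lemma rpow_pos x p : 0 < x -> rpow x p = Rpower x p.
Proof. intros. unfold rpow. destruct (Req_EM_T x 0); [lra|auto]. Qed.

Lemma Rpower_pos x p : 0 < Rpower x p.
Proof. unfold Rpower. apply exp_pos. Qed.

Lemma rpow_ge0 x p : 0 <= rpow x p.
Proof. unfold rpow. destruct (Req_EM_T x 0). lra. left; apply Rpower_pos. Qed.

Lemma rpow_le x y p : 0 <= x -> x <= y -> 0 < p -> rpow x p <= rpow y p.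
Proof.
  intros Hx Hxy Hp. destruct (Req_EM_T x 0) as [->|Hx0].
  - rewrite rpow_0. apply rpow_ge0.
  - rewrite !rpow_pos by lra. apply Rle_Rpower_l; lra.
Qed.

Lemma tangent (p z M : R) : 1 <= p -> 0 <= z -> 0 < M ->
  Rpower M p + p * (Rpower M p / M) * (z - M) <= rpow z p.
Proof.
  intros Hp Hz HM. pose proof (Rpower_pos M p) as HR.
  destruct (Req_EM_T z 0) as [->|Hz0].
  - rewrite rpow_0. replace (Rpower M p + p * (Rpower M p / M) * (0 - M))
      with (Rpower M p * (1 - p)) by (field; lra). nra.
  - rewrite rpow_pos by lra.
    replace z with (M * (z / M)) at 2 by (field; lra).
    rewrite <- Rpower_mult_distr by (try apply Rdiv_lt_0_compat; lra).
    pose proof (bern p (z / M) Hp ltac:(apply Rdiv_lt_0_compat; lra)).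
    replace (Rpower M p + p * (Rpower M p / M) * (z - M))
      with (Rpower M p * (1 + p * (z / M - 1))) by (field; lra).
    apply Rmult_le_compat_l; lra.
Qed.

Definition psi (p t : R) := rpow (Rabs t) p.

Lemma psi_conv (p u v l : R) : 1 <= p -> 0 <= l <= 1 ->
  psi p (l * u + (1 - l) * v) <= l * psi p u + (1 - l) * psi p v.
Proof.
  intros Hp Hl. unfold psi.
  set (m := l * u + (1 - l) * v).
  assert (Htri : Rabs m <= l * Rabs u + (1 - l) * Rabs v).
  { unfold m. eapply Rle_trans. apply Rabs_triang.
    rewrite !Rabs_mult, (Rabs_right l), (Rabs_right (1 - l)) by lra. lra. }
  pose proof (rpow_ge0 (Rabs u) p). pose proof (rpow_ge0 (Rabs v) p).
  destruct (Req_EM_T (Rabs m) 0) as [Hm0|Hm0].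
  - rewrite Hm0, rpow_0. nra.
  - assert (HM : 0 < Rabs m) by (pose proof (Rabs_pos m); lra).
    rewrite (rpow_pos _ _ HM).
    pose proof (tangent p (Rabs u) (Rabs m) Hp (Rabs_pos u) HM) as Tu.
    pose proof (tangent p (Rabs v) (Rabs m) Hp (Rabs_pos v) HM) as Tv.
    set (R0 := Rpower (Rabs m) p) in *.
    set (K := p * (R0 / Rabs m)) in *.
    assert (HK : 0 <= K).
    { unfold K. apply Rmult_le_pos; [lra|]. left. apply Rdiv_lt_0_compat; auto. apply Rpower_pos. }
    assert (l * rpow (Rabs u) p + (1 - l) * rpow (Rabs v) p >=
            l * (R0 + K * (Rabs u - Rabs m)) + (1 - l) * (R0 + K * (Rabs v - Rabs m))).
    { apply Rle_ge. apply Rplus_le_compat; apply Rmult_le_compat_l; lra. }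
    assert (K * (l * Rabs u + (1 - l) * Rabs v - Rabs m) >= 0).
    { apply Rle_ge, Rmult_le_pos; lra. }
    nra.
Qed.

Lemma exch_fin (p A B P Q : R) : 1 <= p -> B <= A -> P <= Q ->
  psi p (A - Q) + psi p (B - P) <= psi p (A - P) + psi p (B - Q).
Proof.
  intros Hp HAB HPQ.
  set (u := A - P). set (v := B - Q). set (d := Q - P).
  destruct (Req_dec u v) as [Huv|Huv].
  - assert (d = 0) by (unfold d, u, v in *; lra).
    replace (A - Q) with u by (unfold u, d in *; lra).
    replace (B - P) with v by (unfold v, d in *; lra). lra.
  - assert (Hlt : v < u).
    { assert (v <= u) by (unfold u, v; lra). destruct H; auto. congruence. }
    set (l := d / (u - v)).
    assert (Hl : 0 <= l <= 1).
    { unfold l. split. apply Rmult_le_pos; [unfold d; lra|left; apply Rinv_0_lt_compat; lra].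
      apply (Rmult_le_reg_r (u - v)); [lra|]. unfold Rdiv. rewrite Rmult_assoc, Rinv_l by lra.
      unfold d, u, v; lra. }
    replace (A - Q) with ((1 - l) * u + (1 - (1 - l)) * v)
      by (unfold l, d, u, v; field; unfold u, v in Hlt; lra).
    replace (B - P) with (l * u + (1 - l) * v)
      by (unfold l, d, u, v; field; unfold u, v in Hlt; lra).
    pose proof (psi_conv p u v (1 - l) Hp ltac:(lra)).
    pose proof (psi_conv p u v l Hp Hl). lra.
Qed.

Lemma fsum_ext n f g : (forall i, (i < n)%nat -> f i = g i) -> fsum n f = fsum n g.
Proof. induction n; simpl; intros H; auto. rewrite IHn, H; auto. Qed.

Lemma fsum_le n f g : (forall i, (i < n)%nat -> f i <= g i) -> fsum n f <= fsum n g.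
Proof. induction n; simpl; intros H. lra. pose proof (H n ltac:(lia)). pose proof (IHn ltac:(auto)). lra. Qed.

Lemma fsum_ge0 n f : (forall i, (i < n)%nat -> 0 <= f i) -> 0 <= fsum n f.
Proof. intros. replace 0 with (fsum n (fun _ => 0)). apply fsum_le; auto.
  clear H; induction n; simpl; auto; lra. Qed.

Lemma fsum_point n f f' k : (k < n)%nat -> (forall i, (i < n)%nat -> i <> k -> f' i = f i) ->
  fsum n f' = fsum n f + (f' k - f k).
Proof.
  induction n; intros Hk H. lia. simpl.
  destruct (Nat.eq_dec n k) as [->|Hnk].
  - rewrite (fsum_ext k f' f) by (intros; apply H; lia). lra.
  - rewrite IHn by (auto; lia). rewrite (H n) by lia. lra.
Qed.

Lemma fmax_ge0 n f : 0 <= fmaxabs n f.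
Proof. induction n; simpl. lra. eapply Rle_trans; [apply IHn|apply Rmax_l]. Qed.

Lemma fmax_term n f i : (i < n)%nat -> Rabs (f i) <= fmaxabs n f.
Proof.
  induction n; intros Hi. lia. simpl. destruct (Nat.eq_dec i n) as [->|]. apply Rmax_r.
  eapply Rle_trans; [apply IHn; lia|apply Rmax_l]. Qed.

Lemma fmax_bound n f M : 0 <= M -> (forall i, (i < n)%nat -> Rabs (f i) <= M) -> fmaxabs n f <= M.
Proof. induction n; simpl; intros HM H. auto. apply Rmax_lub; auto. Qed.

Definition cost (e : expo) (n : nat) (g : nat -> R) : R :=
  match e with Fin p => fsum n (fun i => psi p (g i)) | Inf => fmaxabs n g end.

Lemma lp_cost e n v : lp_norm e n v =
  match e with Fin p => rpow (cost e n v) (1 / p) | Inf => cost e n v end.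
Proof. destruct e; reflexivity. Qed.

Lemma cost_ge0 e n g : 0 <= cost e n g.
Proof. destruct e; simpl. apply fsum_ge0; intros; apply rpow_ge0. apply fmax_ge0. Qed.

Lemma lp_mono e n g h : valid_expo e -> cost e n g <= cost e n h -> lp_norm e n g <= lp_norm e n h.
Proof.
  intros He H. rewrite !lp_cost. destruct e; auto. simpl in He.
  apply rpow_le; auto. apply cost_ge0. apply Rdiv_lt_0_compat; lra.
Qed.

Lemma cost_mono e n g h : valid_expo e -> (forall i, (i < n)%nat -> Rabs (g i) <= Rabs (h i)) ->
  cost e n g <= cost e n h.
Proof.
  intros He H. destruct e; simpl in *.
  - apply fsum_le. intros. unfold psi. apply rpow_le; auto. apply Rabs_pos. lra.
  - apply fmax_bound. apply fmax_ge0. intros. eapply Rle_trans. apply H; auto. apply fmax_term; auto.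
Qed.

Lemma cost_ext e n g h : valid_expo e -> (forall i, (i < n)%nat -> Rabs (g i) = Rabs (h i)) ->
  cost e n g = cost e n h.
Proof. intros He H. apply Rle_antisym; apply cost_mono; auto; intros i Hi; rewrite (H i Hi); apply Rle_refl. Qed.

Definition pairok (e : expo) (u' v' u v : R) : Prop :=
  match e with
  | Fin p => psi p u' + psi p v' <= psi p u + psi p v
  | Inf => Rmax (Rabs u') (Rabs v') <= Rmax (Rabs u) (Rabs v)
  end.

Lemma cost_exchange e n g g' k l : (k < n)%nat -> (l < n)%nat -> k <> l ->
  (forall i, (i < n)%nat -> i <> k -> i <> l -> g' i = g i) ->
  pairok e (g' k) (g' l) (g k) (g l) -> cost e n g' <= cost e n g.
Proof.
  intros Hk Hl Hkl H Hp. destruct e; simpl in *.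
  - set (g1 := fun i => if Nat.eq_dec i k then g' k else g i).
    rewrite (fsum_point n (fun i => psi p (g1 i)) (fun i => psi p (g' i)) l); auto.
    2:{ intros. unfold g1. destruct (Nat.eq_dec i k). subst; auto. rewrite H; auto. }
    rewrite (fsum_point n (fun i => psi p (g i)) (fun i => psi p (g1 i)) k); auto.
    2:{ intros. unfold g1. destruct (Nat.eq_dec i k). congruence. auto. }
    unfold g1. destruct (Nat.eq_dec k k); [|congruence]. destruct (Nat.eq_dec l k); [congruence|].
    lra.
  - apply fmax_bound. apply fmax_ge0. intros i Hi.
    assert (Rmax (Rabs (g k)) (Rabs (g l)) <= fmaxabs n g).
    { apply Rmax_lub; apply fmax_term; auto. }
    destruct (Nat.eq_dec i k) as [->|]. eapply Rle_trans; [apply (Rmax_l _ (Rabs (g' l)))|]; lra.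
    destruct (Nat.eq_dec i l) as [->|]. eapply Rle_trans; [apply (Rmax_r (Rabs (g' k)))|]; lra.
    rewrite H; auto. apply fmax_term; auto.
Qed.

Lemma abs_between u v w : v <= w <= u -> Rabs w <= Rmax (Rabs u) (Rabs v).
Proof.
  intros H. destruct (Rle_dec 0 w).
  - eapply Rle_trans; [|apply Rmax_l]. rewrite !Rabs_right by lra. lra.
  - eapply Rle_trans; [|apply Rmax_r]. rewrite !Rabs_left by lra. lra.
Qed.

Lemma pairok_E e A B P Q : valid_expo e -> B <= A -> P <= Q ->
  pairok e (A - Q) (B - P) (A - P) (B - Q).
Proof.
  intros He HAB HPQ. destruct e; simpl in *.
  - apply exch_fin; auto.
  - apply Rmax_lub; apply abs_between; lra.
Qed.

Definition setup (n : nat) (e : expo) (a : nat -> R) (T : Z -> R) : Prop :=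
  valid_expo e /\
  (forall j k, (j <= k)%Z -> T j <= T k) /\
  (forall j, T (j + Z.of_nat n)%Z = T j + 1) /\
  (forall i k, (i <= k < n)%nat -> a i <= a k) /\
  (forall i k, (i < n)%nat -> (k < n)%nat -> a k < a i + 1).

Definition Jc n e a T (j : nat -> Z) := cost e n (fun i => a i - T (j i)).
Definition resid n (j : nat -> Z) := forall i k, (i < n)%nat -> (k < n)%nat -> i <> k ->
  (j i mod Z.of_nat n <> j k mod Z.of_nat n)%Z.
Definition inr n (j : nat -> Z) lo hi := forall i, (i < n)%nat -> (lo <= j i <= hi)%Z.
Definition Qpre n m (j : nat -> Z) := forall i k, (i < k)%nat -> (k < n)%nat -> (i < m)%nat -> (j i <= j k)%Z.

Definition tr (m k t : nat) : nat := if Nat.eq_dec t m then k else if Nat.eq_dec t k then m else t.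

Lemma tr_lt n m k t : (m < n)%nat -> (k < n)%nat -> (t < n)%nat -> (tr m k t < n)%nat.
Proof. unfold tr; intros; repeat destruct Nat.eq_dec; lia. Qed.
Lemma tr_inj m k t t' : tr m k t = tr m k t' -> t = t'.
Proof. unfold tr; repeat destruct Nat.eq_dec; lia. Qed.

Lemma resid_tr n j m k : (m < n)%nat -> (k < n)%nat -> resid n j -> resid n (fun t => j (tr m k t)).
Proof.
  intros Hm Hk H i i' Hi Hi' Hne. apply H; try apply tr_lt; auto.
  intro E. apply Hne. eapply tr_inj; eauto.
Qed.

Lemma inr_tr n j m k lo hi : (m < n)%nat -> (k < n)%nat -> inr n j lo hi -> inr n (fun t => j (tr m k t)) lo hi.
Proof. intros Hm Hk H i Hi. apply H. apply tr_lt; auto. Qed.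

Lemma argmin n (j : nat -> Z) m : (m < n)%nat -> exists k, (m <= k < n)%nat /\
  forall t, (m <= t < n)%nat -> (j k <= j t)%Z.
Proof.
  induction n; intros Hm. lia.
  destruct (Nat.eq_dec m n) as [->|Hne].
  - exists n. split. lia. intros. assert (t = n) by lia. subst; lia.
  - destruct (IHn ltac:(lia)) as [k [Hk Hmin]].
    destruct (Z_le_gt_dec (j k) (j n)).
    + exists k. split. lia. intros t Ht. destruct (Nat.eq_dec t n). subst; lia. apply Hmin; lia.
    + exists n. split. lia. intros t Ht. destruct (Nat.eq_dec t n). subst; lia.
      specialize (Hmin t ltac:(lia)). lia.
Qed.

Lemma resid_neq n j i k : resid n j -> (i < n)%nat -> (k < n)%nat -> i <> k -> j i <> j k.
Proof. intros H Hi Hk Hne E. apply (H i k Hi Hk Hne). rewrite E; auto. Qed.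

Lemma sel n e a T lo hi : setup n e a T -> forall d m j, (n - m = d)%nat -> (m <= n)%nat ->
  inr n j lo hi -> resid n j -> Qpre n m j ->
  exists j', inr n j' lo hi /\ resid n j' /\ Qpre n n j' /\ Jc n e a T j' <= Jc n e a T j.
Proof.
  intros [He [HT [HTn [Ha Hsp]]]].
  induction d; intros m j Hd Hm Hr Hres HQ.
  - assert (m = n) by lia. subst m. exists j. split; [auto|split; [auto|split; [auto|apply Rle_refl]]].
  - destruct (argmin n j m ltac:(lia)) as [k [Hk Hmin]].
    set (j' := fun t => j (tr m k t)).
    assert (HQ' : Qpre n (S m) j').
    { intros i i' Hii' Hi' Him. unfold j', tr.
      destruct (Nat.eq_dec i m), (Nat.eq_dec i' m), (Nat.eq_dec i k), (Nat.eq_dec i' k); subst; try lia; first [apply Hmin; lia | apply HQ; lia]. }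
    destruct (IHd (S m) j' ltac:(lia) ltac:(lia) (inr_tr n j m k lo hi ltac:(lia) ltac:(lia) Hr)
      (resid_tr n j m k ltac:(lia) ltac:(lia) Hres) HQ') as [j2 [H1 [H2 [H3 H4]]]].
    exists j2. split; [auto|split; [auto|split; [auto|]]]. eapply Rle_trans; [apply H4|].
    destruct (Nat.eq_dec k m) as [->|Hkm].
    + unfold Jc, j'. right. apply cost_ext; auto. intros. unfold tr.
      repeat destruct Nat.eq_dec; subst; auto.
    + unfold Jc. apply (cost_exchange e n _ _ k m); try lia.
      * intros. unfold j', tr. repeat destruct Nat.eq_dec; try lia. auto.
      * unfold j', tr. destruct (Nat.eq_dec k m); try lia. destruct (Nat.eq_dec k k); try lia.
        destruct (Nat.eq_dec m m); try lia.
        apply pairok_E; auto; first [apply HT; apply Hmin; lia | apply Ha; lia].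
Qed.

Lemma incr_gap n (j : nat -> Z) : (forall i k, (i < k)%nat -> (k < n)%nat -> (j i < j k)%Z) ->
  forall d i, (i + d < n)%nat -> (j (i + d)%nat - j i >= Z.of_nat d)%Z.
Proof.
  intros H. induction d; intros i Hi. rewrite Nat.add_0_r. lia.
  specialize (IHd i ltac:(lia)). specialize (H (i + d)%nat (i + S d)%nat ltac:(lia) Hi). lia.
Qed.

Lemma phaseB n e a T lo hi j : setup n e a T -> (1 <= n)%nat -> (hi - lo <= Z.of_nat n - 1)%Z ->
  inr n j lo hi -> resid n j ->
  exists s, (lo <= s <= hi)%Z /\ Jc n e a T (fun i => s + Z.of_nat i)%Z <= Jc n e a T j.
Proof.
  intros Hs Hn Hhl Hr Hres.
  destruct (sel n e a T lo hi Hs n 0 j ltac:(lia) ltac:(lia) Hr Hres ltac:(intros ? ? ? ? ?; lia))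
    as [j' [H1 [H2 [H3 H4]]]].
  assert (Hinc : forall i k, (i < k)%nat -> (k < n)%nat -> (j' i < j' k)%Z).
  { intros i k Hik Hk. pose proof (H3 i k Hik Hk ltac:(lia)).
    pose proof (resid_neq n j' i k H2 ltac:(lia) Hk ltac:(lia)). lia. }
  exists (j' 0%nat). split. apply H1; lia.
  eapply Rle_trans; [|apply H4]. right. unfold Jc. apply cost_ext. apply Hs.
  intros i Hi. f_equal. f_equal. f_equal.
  pose proof (incr_gap n j' Hinc i 0 ltac:(lia)) as G1. rewrite Nat.add_0_l in G1.
  pose proof (incr_gap n j' Hinc (n - 1 - i) i ltac:(lia)) as G2.
  replace (i + (n - 1 - i))%nat with (n - 1)%nat in G2 by lia.
  pose proof (H1 0%nat ltac:(lia)). pose proof (H1 (n-1)%nat ltac:(lia)).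
  rewrite Nat2Z.inj_sub in G2 by lia. rewrite Nat2Z.inj_sub in G2 by lia. lia.
Qed.

Lemma resid_congr n j j' k l : (k < n)%nat -> (l < n)%nat -> resid n j ->
  (forall t, (t < n)%nat -> (j' t mod Z.of_nat n = j (tr k l t) mod Z.of_nat n)%Z) -> resid n j'.
Proof.
  intros Hk Hl H Hc i i' Hi Hi' Hne. rewrite (Hc i Hi), (Hc i' Hi').
  apply (resid_tr n j k l Hk Hl H); auto.
Qed.

Lemma mod_minus_n (x : Z) (n : Z) : ((x - n) mod n = x mod n)%Z.
Proof. replace (x - n)%Z with (x + (-1) * n)%Z by ring. apply Z_mod_plus_full. Qed.
Lemma mod_plus_n (x : Z) (n : Z) : ((x + n) mod n = x mod n)%Z.
Proof. replace (x + n)%Z with (x + 1 * n)%Z by ring. apply Z_mod_plus_full. Qed.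

Lemma phaseA n e a T : setup n e a T -> (1 <= n)%nat -> forall N j lo hi,
  (hi - lo <= Z.of_nat N)%Z -> inr n j lo hi -> resid n j ->
  exists s, (lo <= s <= hi)%Z /\ Jc n e a T (fun i => s + Z.of_nat i)%Z <= Jc n e a T j.
Proof.
  intros Hs Hn. pose proof Hs as [He [HT [HTn [Ha Hsp]]]].
  induction N; intros j lo hi HN Hr Hres;
    (destruct (Z_le_gt_dec (hi - lo) (Z.of_nat n - 1)) as [Hb|Hb];
      [apply (phaseB n e a T lo hi j); auto|]).
  - lia.
  - destruct (classic (exists k, (k < n)%nat /\ j k = lo)) as [[k [Hk Hjk]]|Hno].
    2:{ destruct (IHN j (lo + 1)%Z hi ltac:(lia)) as [s [Hs1 Hs2]]; auto.
        - intros i Hi. pose proof (Hr i Hi). assert (j i <> lo) by (intro; apply Hno; eauto). lia.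
        - exists s. split. lia. auto. }
    destruct (classic (exists l, (l < n)%nat /\ j l = hi)) as [[l [Hl Hjl]]|Hno].
    2:{ destruct (IHN j lo (hi - 1)%Z ltac:(lia)) as [s [Hs1 Hs2]]; auto.
        - intros i Hi. pose proof (Hr i Hi). assert (j i <> hi) by (intro; apply Hno; eauto). lia.
        - exists s. split. lia. auto. }
    assert (Hkl : k <> l) by (intro; subst; lia).
    assert (Hgap : (hi <> lo + Z.of_nat n)%Z).
    { intro E. apply (Hres k l Hk Hl Hkl). rewrite Hjk, Hjl, E. rewrite mod_plus_n. auto. }
    set (j' := fun t => if Nat.eq_dec t k then (hi - Z.of_nat n)%Z
                        else if Nat.eq_dec t l then (lo + Z.of_nat n)%Z else j t).
    assert (Hr' : inr n j' (lo + 1) (hi - 1)).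
    { intros t Ht. unfold j'. destruct (Nat.eq_dec t k). lia. destruct (Nat.eq_dec t l). lia.
      pose proof (Hr t Ht). pose proof (resid_neq n j t k Hres Ht Hk n0).
      pose proof (resid_neq n j t l Hres Ht Hl n1). lia. }
    assert (Hres' : resid n j').
    { apply (resid_congr n j j' k l Hk Hl Hres). intros t Ht. unfold j', tr.
      destruct (Nat.eq_dec t k). rewrite Hjl, mod_minus_n. auto.
      destruct (Nat.eq_dec t l). rewrite Hjk, mod_plus_n. auto. auto. }
    destruct (IHN j' (lo + 1)%Z (hi - 1)%Z ltac:(lia) Hr' Hres') as [s [Hs1 Hs2]].
    exists s. split. lia. eapply Rle_trans; [apply Hs2|].
    unfold Jc. apply (cost_exchange e n _ _ k l); auto.
    + intros. unfold j'. repeat destruct Nat.eq_dec; try lia. auto.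
    + unfold j'. destruct (Nat.eq_dec k k); [|lia]. destruct (Nat.eq_dec l k); [lia|].
      destruct (Nat.eq_dec l l); [|lia]. rewrite Hjk, Hjl.
      assert (E1 : T (hi - Z.of_nat n)%Z = T hi - 1).
      { pose proof (HTn (hi - Z.of_nat n)%Z) as E. replace (hi - Z.of_nat n + Z.of_nat n)%Z with hi in E by ring. lra. }
      rewrite E1, HTn.
      replace (a k - (T hi - 1)) with (a k - (T hi - 1)) by ring.
      replace (a l - (T lo + 1)) with ((a l - 1) - T lo) by ring.
      replace (a l - T hi) with ((a l - 1) - (T hi - 1)) by ring.
      apply pairok_E; auto.
      * pose proof (Hsp k l Hk Hl). lra.
      * rewrite <- E1. apply HT. lia.
Qed.

Lemma rpow_small (p y : R) : 1 <= p -> 0 < y < 1 -> rpow y p <= y.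
Proof.
  intros Hp Hy. rewrite rpow_pos by lra. unfold Rpower.
  assert (ln y < 0) by (rewrite <- ln_1; apply ln_increasing; lra).
  rewrite <- (exp_ln y) at 2 by lra. apply exp_le_mono. nra.
Qed.

Lemma cont_psi p t : 1 <= p -> continuous (psi p) t.
Proof.
  intros Hp. apply continuity_pt_filterlim.
  destruct (Req_dec t 0) as [->|Ht].
  - unfold continuity_pt, continue_in, limit1_in, limit_in. simpl. unfold R_dist.
    intros eps Heps. exists (Rmin 1 eps). split. apply Rmin_pos; lra.
    intros y [_ Hy]. unfold psi in *. rewrite Rabs_R0, rpow_0, Rminus_0_r in *.
    rewrite Rabs_right by (apply Rle_ge, rpow_ge0).
    pose proof (Rmin_l 1 eps). pose proof (Rmin_r 1 eps).
    destruct (Req_dec (Rabs y) 0) as [Hy0|Hy0]. rewrite Hy0, rpow_0. lra.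
    pose proof (Rabs_pos y). pose proof (rpow_small p (Rabs y) Hp ltac:(lra)). lra.
  - assert (Ha : 0 < Rabs t) by (apply Rabs_pos_lt; auto).
    apply (continuity_pt_locally_ext (fun y => exp (p * ln (Rabs y))) _ (Rabs t)); auto.
    + intros y Hy. unfold psi. unfold Rdist in Hy.
      assert (0 < Rabs y).
      { pose proof (Rabs_triang_inv t y). replace (t - y) with (-(y - t)) in H by ring.
        rewrite Rabs_Ropp in H. lra. }
      rewrite rpow_pos by auto. reflexivity.
    + apply continuity_pt_filterlim. apply (ex_derive_continuous (fun y => exp (p * ln (Rabs y)))).
      auto_derive. repeat split; auto.
Qed.

Lemma cont_Rmax (f g : R -> R) c : continuous f c -> continuous g c ->
  continuous (fun x => Rmax (f x) (g x)) c.
Proof.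
  intros Hf Hg.
  apply (continuous_ext (fun x => (f x + g x + Rabs (f x - g x)) / 2)).
  - intros x. unfold Rmax. destruct Rle_dec; unfold Rabs; destruct Rcase_abs; lra.
  - apply (continuous_scal_l (fun x => f x + g x + Rabs (f x - g x)) (/2)).
    apply (continuous_plus (fun x => f x + g x)). apply (continuous_plus f g); auto.
    apply continuous_Rabs_comp. apply (continuous_minus f g); auto.
Qed.

Lemma cont_cost e n (G : nat -> R -> R) c : valid_expo e -> (forall i, continuous (G i) c) ->
  continuous (fun c => cost e n (fun i => G i c)) c.
Proof.
  intros He HG. destruct e; simpl in *.
  - induction n; simpl. apply continuous_const.
    apply (continuous_plus (fun c => fsum n (fun i => psi p (G i c))) (fun c => psi p (G n c))); auto.
    apply (continuous_comp (G n) (psi p)); auto. apply cont_psi; auto.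
  - induction n; simpl. apply continuous_const.
    apply cont_Rmax; auto. apply continuous_Rabs_comp; auto.
Qed.

Lemma box_min (F : R -> Z -> R) lo : (forall s c, continuous (fun c => F c s) c) ->
  forall N : nat, exists c0 s0, 0 <= c0 <= 1 /\ (lo <= s0 <= lo + Z.of_nat N)%Z /\
  forall c s, 0 <= c <= 1 -> (lo <= s <= lo + Z.of_nat N)%Z -> F c0 s0 <= F c s.
Proof.
  intros HF. assert (Hm : forall s, exists c0, 0 <= c0 <= 1 /\ forall c, 0 <= c <= 1 -> F c0 s <= F c s).
  { intros s. destruct (continuity_ab_min (fun c => F c s) 0 1) as [m [H1 H2]]. lra.
    intros. apply continuity_pt_filterlim. apply HF. exists m; split; auto. }
  induction N.
  - destruct (Hm lo) as [c0 [H1 H2]]. exists c0, lo. split; auto. split. lia.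
    intros c s Hc Hs. replace s with lo by lia. auto.
  - destruct IHN as [c1 [s1 [H1 [H2 H3]]]].
    destruct (Hm (lo + Z.of_nat (S N))%Z) as [c2 [H4 H5]].
    destruct (Rle_dec (F c1 s1) (F c2 (lo + Z.of_nat (S N))%Z)).
    + exists c1, s1. split; auto. split. lia. intros c s Hc Hs.
      destruct (Z.eq_dec s (lo + Z.of_nat (S N))%Z) as [->|].
      * eapply Rle_trans; [apply r|]. auto.
      * apply H3; auto. lia.
    + exists c2, (lo + Z.of_nat (S N))%Z. split; auto. split. lia. intros c s Hc Hs.
      destruct (Z.eq_dec s (lo + Z.of_nat (S N))%Z) as [->|]. auto.
      eapply Rle_trans; [|apply H3; auto; lia]. lra.
Qed.

Lemma mod1_bound x : 0 <= mod1 x < 1.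
Proof.
  unfold mod1, floorZ. rewrite minus_IZR. pose proof (archimed x). simpl. lra.
Qed.

Lemma mod1_eq x : x = mod1 x + IZR (floorZ x).
Proof. unfold mod1. ring. Qed.

Definition Kf (u v : R) : Z :=
  if Rle_dec (Rabs (u - v)) (1 - Rabs (u - v)) then 0%Z
  else if Rle_dec v u then 1%Z else (-1)%Z.

Lemma circ_K u v : 0 <= u < 1 -> 0 <= v < 1 ->
  circ_dist u v = Rabs (u - v - IZR (Kf u v)) /\ (-1 <= Kf u v <= 1)%Z.
Proof.
  intros Hu Hv. unfold circ_dist, Kf, Rmin.
  destruct (Rle_dec (Rabs (u - v)) (1 - Rabs (u - v))); simpl.
  - split. rewrite Rminus_0_r. auto. lia.
  - destruct (Rle_dec v u); simpl; split; try lia.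
    + rewrite (Rabs_right (u - v)) by lra. rewrite Rabs_left by lra. lra.
    + rewrite (Rabs_left (u - v)) by lra. rewrite Rabs_right by lra. lra.
Qed.

Lemma circ_ge0 u v : 0 <= u < 1 -> 0 <= v < 1 -> 0 <= circ_dist u v.
Proof. intros. destruct (circ_K u v H H0) as [-> _]. apply Rabs_pos. Qed.

Lemma circ_A u v m : 0 <= u < 1 -> 0 <= v < 1 -> circ_dist u v <= Rabs (u - v + IZR m).
Proof.
  intros Hu Hv. unfold circ_dist.
  destruct (Z.eq_dec m 0) as [->|Hm].
  - simpl. rewrite Rplus_0_r. apply Rmin_l.
  - eapply Rle_trans; [apply Rmin_r|].
    destruct (Z_le_gt_dec 1 m).
    + apply IZR_le in l. simpl in l.
      rewrite (Rabs_right (u - v + IZR m)) by lra.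
      unfold Rabs; destruct Rcase_abs; lra.
    + assert (m <= -1)%Z by lia. apply IZR_le in H. simpl in H.
      rewrite (Rabs_left (u - v + IZR m)) by lra.
      unfold Rabs; destruct Rcase_abs; lra.
Qed.


Lemma unroll_shift n y j : (1 <= n)%nat -> unroll n y (j + Z.of_nat n)%Z = unroll n y j + 1.
Proof.
  intros Hn. unfold unroll. rewrite mod_plus_n.
  replace (j + Z.of_nat n)%Z with (j + 1 * Z.of_nat n)%Z by ring.
  rewrite Z_div_plus_full by lia. rewrite plus_IZR. simpl. ring.
Qed.

Lemma unroll_at n y r m : (r < n)%nat ->
  unroll n y (Z.of_nat r + Z.of_nat n * m)%Z = y r + IZR m.
Proof.
  intros Hr. unfold unroll. rewrite (Z.mul_comm (Z.of_nat n) m).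
  rewrite Z_mod_plus_full, Z_div_plus_full by lia.
  rewrite Z.mod_small, Z.div_small by lia. rewrite Nat2Z.id. simpl. ring.
Qed.

Lemma unroll_mono n y j k : (1 <= n)%nat -> sorted01 n y -> (j <= k)%Z -> unroll n y j <= unroll n y k.
Proof.
  intros Hn [Hy1 Hy2] Hjk. unfold unroll.
  set (N := Z.of_nat n). assert (HN : (0 < N)%Z) by (unfold N; lia).
  pose proof (Z.div_le_mono j k N HN Hjk).
  pose proof (Z.mod_pos_bound j N HN). pose proof (Z.mod_pos_bound k N HN).
  assert (Hj : (Z.to_nat (j mod N) < n)%nat) by (unfold N in *; lia).
  assert (Hk : (Z.to_nat (k mod N) < n)%nat) by (unfold N in *; lia).
  pose proof (Hy1 _ Hj). pose proof (Hy1 _ Hk).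
  destruct (Z.eq_dec (j / N) (k / N)) as [E|E].
  { rewrite E. apply Rplus_le_compat_r. apply Hy2. split; [|auto].
    pose proof (Z.div_mod j N ltac:(lia)) as D1. pose proof (Z.div_mod k N ltac:(lia)) as D2. rewrite E in D1.
    apply Z2Nat.inj_le; lia. }
  { assert (j / N + 1 <= k / N)%Z as H4 by lia. apply IZR_le in H4. rewrite plus_IZR in H4. simpl in H4. lra. }
Qed.

Lemma sigma_inj n s i k : (i < n)%nat -> (k < n)%nat -> ((i + s) mod n = (k + s) mod n)%nat -> i = k.
Proof.
  intros Hi Hk E.
  pose proof (Nat.div_mod_eq (i + s) n). pose proof (Nat.div_mod_eq (k + s) n).
  rewrite E in H. set (r := ((k + s) mod n)%nat) in *.
  set (q1 := ((i + s) / n)%nat) in *. set (q2 := ((k + s) / n)%nat) in *.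
  destruct (Nat.lt_total q1 q2) as [|[|]]; nia.
Qed.

Definition Ltn e n x y c s := lin_obj e n x y c s.

Lemma lin_cost e n x y c s : valid_expo e -> lin_obj e n x y c s =
  lp_norm e n (fun i => x i + c - unroll n y (Z.of_nat i + s)%Z).
Proof.
  intros He. unfold lin_obj. rewrite !lp_cost.
  rewrite (cost_ext e n (fun i => Rabs (x i + c - unroll n y (Z.of_nat i + s))) (fun i => x i + c - unroll n y (Z.of_nat i + s))); auto.
  intros. apply Rabs_Rabsolu.
Qed.

Lemma dirA e n x y c s : (1 <= n)%nat -> valid_expo e -> sorted01 n y ->
  circ_obj e n x y (mod1 c) (Z.to_nat (s mod Z.of_nat n)) <= lin_obj e n x y c s.
Proof.
  intros Hn He [Hy1 Hy2]. unfold circ_obj, lin_obj. apply lp_mono; auto. apply cost_mono; auto.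
  intros i Hi. set (s' := Z.to_nat (s mod Z.of_nat n)).
  assert (Hs : (0 <= s mod Z.of_nat n < Z.of_nat n)%Z) by (apply Z.mod_pos_bound; lia).
  assert (Hr : (0 <= (Z.of_nat i + s) mod Z.of_nat n < Z.of_nat n)%Z) by (apply Z.mod_pos_bound; lia).
  assert (E : ((i + s') mod n)%nat = Z.to_nat ((Z.of_nat i + s) mod Z.of_nat n)).
  { apply Nat2Z.inj. rewrite Nat2Z.inj_mod, Nat2Z.inj_add. unfold s'. rewrite Z2Nat.id by lia.
    rewrite Zplus_mod_idemp_r. rewrite Z2Nat.id by lia. auto. }
  rewrite E. unfold unroll.
  set (r := Z.to_nat ((Z.of_nat i + s) mod Z.of_nat n)).
  assert (Hrn : (r < n)%nat) by (unfold r; lia).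
  pose proof (Hy1 r Hrn).
  pose proof (mod1_bound (x i + mod1 c)).
  rewrite Rabs_Rabsolu. rewrite Rabs_right by (apply Rle_ge, circ_ge0; auto).
  replace (x i + c - (y r + IZR ((Z.of_nat i + s) / Z.of_nat n)))
    with (mod1 (x i + mod1 c) - y r + IZR (floorZ (x i + mod1 c) + floorZ c - (Z.of_nat i + s) / Z.of_nat n)).
  apply circ_A; auto.
  rewrite !minus_IZR, plus_IZR.
  pose proof (mod1_eq (x i + mod1 c)). pose proof (mod1_eq c). lra.
Qed.

Lemma floor_bound a : 0 <= a < 2 -> (0 <= floorZ a <= 1)%Z.
Proof.
  intros Ha. pose proof (mod1_bound a). pose proof (mod1_eq a).
  assert (-1 < IZR (floorZ a) < 2) by lra. destruct H1.
  apply lt_IZR in H1. apply lt_IZR in H2. lia.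
Qed.

Lemma dirB e n x y c s : (1 <= n)%nat -> valid_expo e -> sorted01 n x -> sorted01 n y ->
  0 <= c < 1 -> (s < n)%nat ->
  exists s', (- Z.of_nat n <= s' <= - Z.of_nat n + Z.of_nat (4 * n))%Z /\
    lin_obj e n x y c s' <= circ_obj e n x y c s.
Proof.
  intros Hn He [Hx1 Hx2] [Hy1 Hy2] Hc Hs.
  set (a := fun i => x i + c).
  set (sg := fun i => ((i + s) mod n)%nat).
  set (m := fun i => (floorZ (a i) + Kf (mod1 (a i)) (y (sg i)))%Z).
  set (j := fun i => (Z.of_nat (sg i) + Z.of_nat n * m i)%Z).
  assert (Hsg : forall i, (sg i < n)%nat) by (intros; apply Nat.mod_upper_bound; lia).
  assert (Hset : setup n e a (unroll n y)).
  { split; auto. split. intros; apply unroll_mono; auto; split; auto.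
    split. intros; apply unroll_shift; auto.
    split. intros i k Hik. unfold a. pose proof (Hx2 i k Hik). lra.
    intros i k Hi Hk. unfold a. pose proof (Hx1 i Hi). pose proof (Hx1 k Hk). lra. }
  assert (Hterm : forall i, (i < n)%nat ->
    Rabs (a i - unroll n y (j i)) = circ_dist (mod1 (x i + c)) (y ((i + s) mod n)%nat)).
  { intros i Hi. unfold j. rewrite unroll_at by auto.
    pose proof (mod1_bound (a i)). pose proof (Hy1 (sg i) (Hsg i)).
    destruct (circ_K (mod1 (a i)) (y (sg i))) as [HK _]; auto.
    fold (a i). fold (sg i). rewrite HK. f_equal. unfold m. rewrite plus_IZR.
    pose proof (mod1_eq (a i)). lra. }
  assert (Hr : inr n j (- Z.of_nat n) (- Z.of_nat n + Z.of_nat (4 * n))).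
  { intros i Hi. unfold j, m.
    pose proof (Hsg i). pose proof (Hx1 i Hi).
    pose proof (floor_bound (a i) ltac:(unfold a; lra)).
    pose proof (mod1_bound (a i)). pose proof (Hy1 (sg i) (Hsg i)).
    destruct (circ_K (mod1 (a i)) (y (sg i))) as [_ HK]; auto. nia. }
  assert (Hres : resid n j).
  { intros i k Hi Hk Hne. unfold j.
    rewrite !(Z.mul_comm (Z.of_nat n)), !Z_mod_plus_full.
    rewrite !Z.mod_small by (pose proof (Hsg i); pose proof (Hsg k); lia).
    intro E. apply Hne. apply Nat2Z.inj in E. apply (sigma_inj n s); auto. }
  destruct (phaseA n e a (unroll n y) Hset Hn (4 * n) j (- Z.of_nat n)%Z (- Z.of_nat n + Z.of_nat (4 * n))%Z ltac:(lia) Hr Hres) as [s' [Hs1 Hs2]].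
  exists s'. split; auto.
  rewrite lin_cost by auto. unfold circ_obj. apply lp_mono; auto.
  unfold Jc in Hs2. eapply Rle_trans; [|eapply Rle_trans; [apply Hs2|]].
  - right. apply cost_ext; auto. intros. unfold a. rewrite Z.add_comm. auto.
  - right. apply cost_ext; auto. intros i Hi. rewrite Hterm by auto.
    rewrite Rabs_right; auto. apply Rle_ge, circ_ge0. apply mod1_bound. apply Hy1.
    apply Nat.mod_upper_bound; lia.
Qed.

Theorem mainTheorem1 (n : nat) (e : expo) (x y : nat -> R) :
  (1 <= n)%nat -> valid_expo e -> sorted01 n x -> sorted01 n y ->
  exists c0 s0,
    0 <= c0 < 1 /\ (s0 < n)%nat /\
    (forall c s, 0 <= c < 1 -> (s < n)%nat ->
       circ_obj e n x y c0 s0 <= circ_obj e n x y c s) /\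
    is_inf (fun v => exists c s, v = lin_obj e n x y c s) (circ_obj e n x y c0 s0).
Proof.
  intros Hn He Hx Hy.
  set (F := fun c s => cost e n (fun i => x i + c - unroll n y (Z.of_nat i + s)%Z)).
  assert (HL : forall c1 s1 c2 s2, F c1 s1 <= F c2 s2 -> lin_obj e n x y c1 s1 <= lin_obj e n x y c2 s2).
  { intros. rewrite !lin_cost by auto. apply lp_mono; auto. }
  destruct (box_min F (- Z.of_nat n)%Z) with (N := (4 * n)%nat) as [cs [ss [Hc1 [Hs1 Hmin]]]].
  { intros s c. unfold F. apply cont_cost; auto. intros i.
    apply (continuous_minus (fun c => x i + c) (fun _ => unroll n y (Z.of_nat i + s)%Z)).
    apply (continuous_plus (fun _ => x i) (fun c => c)). apply continuous_const. apply continuous_id.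
    apply continuous_const. }
  assert (Hglob : forall c s, lin_obj e n x y cs ss <= lin_obj e n x y c s).
  { intros c s. pose proof (dirA e n x y c s Hn He Hy).
    destruct (dirB e n x y (mod1 c) (Z.to_nat (s mod Z.of_nat n)) Hn He Hx Hy (mod1_bound c))
      as [s3 [Hs3 H3]].
    { pose proof (Z.mod_pos_bound s (Z.of_nat n) ltac:(lia)). lia. }
    pose proof (mod1_bound c).
    pose proof (HL cs ss (mod1 c) s3 (Hmin (mod1 c) s3 ltac:(lra) Hs3)). lra. }
  assert (Hcirc : forall c s, 0 <= c < 1 -> (s < n)%nat -> lin_obj e n x y cs ss <= circ_obj e n x y c s).
  { intros c s Hc Hs. destruct (dirB e n x y c s Hn He Hx Hy Hc Hs) as [s3 [_ H3]].
    pose proof (Hglob c s3). lra. }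
  exists (mod1 cs), (Z.to_nat (ss mod Z.of_nat n)).
  pose proof (dirA e n x y cs ss Hn He Hy) as HA.
  split. apply mod1_bound. split.
  { pose proof (Z.mod_pos_bound ss (Z.of_nat n) ltac:(lia)). lia. }
  split.
  - intros c s Hc Hs. pose proof (Hcirc c s Hc Hs). lra.
  - split.
    + intros z [c [s ->]]. pose proof (Hglob c s). lra.
    + intros b Hb. eapply Rle_trans; [apply (Hb _ (ex_intro _ cs (ex_intro _ ss eq_refl)))|].
      apply Hcirc. apply mod1_bound. pose proof (Z.mod_pos_bound ss (Z.of_nat n) ltac:(lia)). lia.
Qed.
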